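(* Let $\{E^{(f)}\}_{f\in\mathcal F}$ be a finite family of linear operators on $\mathbb{C}^2$ (describing Eve's action on Bob's qubit), and define the (unnormalized) two-qubit state $$\rho=\sum_{k=0}^{3}\sum_{f\in\mathcal F}\big(I_A\otimes F R^{-k}E^{(f)}R^{k}\big)|\Psi\rangle\langle\Psi|\big(I_A\otimes F R^{-k}E^{(f)}R^{k}\big)^\dagger ,$$ where $|\Psi\rangle=\frac{1}{\sqrt2}\big(|0_z\rangle_A|\varphi_0\rangle_B+|1_z\rangle_A|\varphi_1\rangle_B\big)$. Assume $\operatorname{Tr}\rho>0$ and set $p_X=\langle\Psi^+|\rho|\Psi^+\rangle/\operatorname{Tr}\rho$, $p_Z=\langle\Phi^-|\rho|\Phi^-\rangle/\operatorname{Tr}\rho$, $p_Y=\langle\Psi^-|\rho|\Psi^-\rangle/\operatorname{Tr}\rho$. Let $e_b=p_X+p_Y$ (the bit error rate) and $a=p_Y$. Then $$p_X=e_b-a,\qquad p_Z=\tfrac32 e_b-a,\qquad p_Y=a,$$ and $e_b/2\le a\le e_b$.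
   Context: Qubits use two orthonormal bases related by $|0_x\rangle=(|0_z\rangle+|1_z\rangle)/\sqrt2$, $|1_x\rangle=(|0_z\rangle-|1_z\rangle)/\sqrt2$. Let $\alpha=\sin(\pi/8)$, $\beta=\cos(\pi/8)$, $|\varphi_0\rangle=\beta|0_x\rangle+\alpha|1_x\rangle$, $R=\cos(\pi/4)I+\sin(\pi/4)\big(|1_x\rangle\langle 0_x|-|0_x\rangle\langle 1_x|\big)$ and $|\varphi_m\rangle=R^{-m}|\varphi_0\rangle$ for $m=0,\dots,3$. The filtering operator is $F=\sin(\pi/8)|0_x\rangle\langle0_x|+\cos(\pi/8)|1_x\rangle\langle1_x|$. The Bell states are $|\Phi^\pm\rangle=(|0_z0_z\rangle\pm|1_z1_z\rangle)/\sqrt2$ and $|\Psi^\pm\rangle=(|0_z1_z\rangle\pm|1_z0_z\rangle)/\sqrt2$; $p_X,p_Y,p_Z$ are the probabilities of bit-flip, bit-and-phase-flip, and phase-flip errors relative to $|\Phi^+\rangle$. *)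

(* Defs.v *)
From HB Require Import structures.
From mathcomp Require Import all_boot all_order all_algebra.
From mathcomp Require Import all_classical all_reals.
From mathcomp Require Import interval_inference topology normedtype sequences exp trigo.
From mathcomp Require Import complex mxtens.
Set Implicit Arguments. Unset Strict Implicit. Unset Printing Implicit Defensive.
Import Order.TTheory GRing.Theory Num.Theory.
Local Open Scope ring_scope.
Local Open Scope complex_scope.

Section QKD.
Variable R : realType.
Local Notation C := R[i].

Definition rc (x : R) : C := x%:C.

Definition adj {m n} (A : 'M[C]_(m, n)) : 'M[C]_(n, m) := (map_mx conjc A)^T.

Definition ket0z : 'cV[C]_2 := delta_mx 0 0.
Definition ket1z : 'cV[C]_2 := delta_mx 1 0.
Definition ket0x : 'cV[C]_2 := rc (Num.sqrt 2)^-1 *: (ket0z + ket1z).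
Definition ket1x : 'cV[C]_2 := rc (Num.sqrt 2)^-1 *: (ket0z - ket1z).

Definition alpha : R := sin (pi / 8).
Definition beta : R := cos (pi / 8).

Definition phi0 : 'cV[C]_2 := rc beta *: ket0x + rc alpha *: ket1x.

Definition Rot : 'M[C]_2 :=
  rc (cos (pi / 4)) *: 1%:M
  + rc (sin (pi / 4)) *: (ket1x *m adj ket0x - ket0x *m adj ket1x).

Definition phi (m : nat) : 'cV[C]_2 := (Rot ^- m) *m phi0.

Definition Filt : 'M[C]_2 :=
  rc (sin (pi / 8)) *: (ket0x *m adj ket0x) + rc (cos (pi / 8)) *: (ket1x *m adj ket1x).

(* two-qubit vectors, system A first *)
Definition PsiAB : 'M[C]_(2 * 2, 1 * 1) :=
  rc (Num.sqrt 2)^-1 *: (ket0z *t phi 0 + ket1z *t phi 1).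

Definition PhiP : 'M[C]_(2 * 2, 1 * 1) := rc (Num.sqrt 2)^-1 *: (ket0z *t ket0z + ket1z *t ket1z).
Definition PhiM : 'M[C]_(2 * 2, 1 * 1) := rc (Num.sqrt 2)^-1 *: (ket0z *t ket0z - ket1z *t ket1z).
Definition PsiP : 'M[C]_(2 * 2, 1 * 1) := rc (Num.sqrt 2)^-1 *: (ket0z *t ket1z + ket1z *t ket0z).
Definition PsiM : 'M[C]_(2 * 2, 1 * 1) := rc (Num.sqrt 2)^-1 *: (ket0z *t ket1z - ket1z *t ket0z).

Definition rho (I : finType) (E : I -> 'M[C]_2) : 'M[C]_(2 * 2) :=
  \sum_(k < 4) \sum_(f : I)
    let K := (1%:M : 'M[C]_2) *t (Filt *m Rot ^- k *m E f *m Rot ^+ k) in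
    K *m (PsiAB *m adj PsiAB) *m adj K.

Definition expect {n} (v : 'cV[C]_n) (M : 'M[C]_n) : C := (adj v *m M *m v) 0 0.

End QKD.

(* Main.v *)
Require Import Defs.
From HB Require Import structures.
From mathcomp Require Import all_boot all_order all_algebra.
From mathcomp Require Import all_classical all_reals.
From mathcomp Require Import interval_inference topology normedtype sequences exp trigo.
From mathcomp Require Import complex mxtens.
From mathcomp Require Import ring lra.
Import Order.TTheory GRing.Theory Num.Theory.
Local Open Scope ring_scope.

Section Helpers.
Local Open Scope complex_scope.
Variable R : realType.
Local Notation C := R[i].

Lemma ord2P (i : 'I_2) : i = 0 \/ i = 1.
Proof. case: i => [[|[|k]]] Hk; [left|right|by []]; exact/val_inj. Qed.
Lemma e10 : ((1 : 'I_2) == 0) = false. Proof. by []. Qed.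
Lemma e01 : ((0 : 'I_2) == 1) = false. Proof. by []. Qed.
Lemma sum2 (F : 'I_2 -> C) : \sum_(i < 2) F i = F 0 + F 1.
Proof. rewrite big_ord_recl big_ord1; congr (_ + F _); exact/val_inj. Qed.
Lemma sum1 (F : 'I_1 -> C) : \sum_(i < 1) F i = F 0.
Proof. by rewrite big_ord1. Qed.

Definition mx2 (a b c d : C) : 'M[C]_2 :=
  \matrix_(i < 2, j < 2) (if i == 0 then (if j == 0 then a else b) else (if j == 0 then c else d)).
Definition cv2 (x y : C) : 'cV[C]_2 := \col_(i < 2) (if i == 0 then x else y).
Definition rv2 (x y : C) : 'rV[C]_2 := \row_(j < 2) (if j == 0 then x else y).

Ltac cases := repeat match goal with
  | i : 'I_2 |- _ => case: (ord2P i) => ->; clear i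
  | i : 'I_1 |- _ => rewrite (ord1 i); clear i end.

Lemma mx2_mul a b c d e f g h :
  mx2 a b c d *m mx2 e f g h = mx2 (a*e+b*g) (a*f+b*h) (c*e+d*g) (c*f+d*h).
Proof. apply/matrixP => i j; rewrite !mxE sum2 !mxE; cases; by rewrite ?eqxx ?e10. Qed.
Lemma mx2_mulr a b c d e f g h :
  mx2 a b c d * mx2 e f g h = mx2 (a*e+b*g) (a*f+b*h) (c*e+d*g) (c*f+d*h).
Proof. exact: mx2_mul. Qed.
Lemma mx2_cv2 a b c d x y : mx2 a b c d *m cv2 x y = cv2 (a*x+b*y) (c*x+d*y).
Proof. apply/matrixP => i j; rewrite !mxE sum2 !mxE; cases; by rewrite ?eqxx ?e10. Qed.
Lemma rv2_mx2 a b c d x y : rv2 x y *m mx2 a b c d = rv2 (x*a+y*c) (x*b+y*d).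
Proof. apply/matrixP => i j; rewrite !mxE sum2 !mxE; cases; by rewrite ?eqxx ?e10. Qed.
Lemma rv2_cv2 x y u v : (rv2 x y *m cv2 u v) 0 0 = x*u + y*v.
Proof. by rewrite !mxE sum2 !mxE ?eqxx ?e10. Qed.
Lemma mx2_eta (M : 'M[C]_2) : M = mx2 (M 0 0) (M 0 1) (M 1 0) (M 1 1).
Proof. apply/matrixP => i j; rewrite !mxE; cases; by rewrite ?eqxx ?e10. Qed.
Lemma mx2_one : (1%:M : 'M[C]_2) = mx2 1 0 0 1.
Proof. apply/matrixP => i j; rewrite !mxE; cases; by rewrite ?eqxx ?e10. Qed.
Lemma mx2_1 : (1 : 'M[C]_2) = mx2 1 0 0 1.
Proof. exact: mx2_one. Qed.

Definition sr : R := (Num.sqrt 2)^-1.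
Lemma sr_gt0 : 0 < sr. Proof. by rewrite /sr invr_gt0 sqrtr_gt0. Qed.
Lemma sr2 : sr * sr = 1/2.
Proof. rewrite /sr -invfM -expr2 sqr_sqrtr //; by rewrite mul1r. Qed.
Lemma cos_pi4 : cos (pi / 4 : R) = sr.
Proof.
have e : (pi / 4 : R) *+ 2 = pi / 2 by lra.
have h : cos (pi / 4 : R) ^+ 2 *+ 2 - 1 = 0 by rewrite -cos_mulr2n e cos_pihalf.
have hp : 0 < cos (pi / 4 : R).
  apply: cos_gt0_pihalf; have hpi := pi_gt0 R; apply/andP; split; lra.
have := sr_gt0; have := sr2; move: h hp; rewrite expr2 mulr2n => h hp h1 h2.
apply: le_anti; apply/andP; split; nra.
Qed.
Lemma sin_pi4 : sin (pi / 4 : R) = sr.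
Proof.
have e : (pi / 4 : R) *+ 2 = pi / 2 by lra.
have h : (cos (pi / 4 : R) * sin (pi / 4)) *+ 2 = 1.
  by rewrite -sin_mulr2n e sin_pihalf.
move: h; rewrite cos_pi4 mulr2n => h.
have h1 := sr_gt0; have h2 := sr2.
have h3 : sr * (sin (pi / 4) - sr) = 0 by lra.
move/eqP: h3; rewrite mulf_eq0 subr_eq0 gt_eqF //= => /eqP //.
Qed.
Lemma beta2 : cos (pi / 8 : R) * cos (pi / 8) = (1 + sr) / 2.
Proof.
have e : (pi / 8 : R) *+ 2 = pi / 4 by lra.
have h : cos (pi / 8 : R) ^+ 2 *+ 2 - 1 = sr by rewrite -cos_mulr2n e cos_pi4.
move: h; rewrite expr2 mulr2n => h; lra.
Qed.
Lemma alphabeta : sin (pi / 8 : R) * cos (pi / 8) = sr / 2.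
Proof.
have e : (pi / 8 : R) *+ 2 = pi / 4 by lra.
have h : (cos (pi / 8 : R) * sin (pi / 8)) *+ 2 = sr by rewrite -sin_mulr2n e sin_pi4.
move: h; rewrite mulr2n => h; lra.
Qed.
Lemma alpha_eq : sin (pi / 8 : R) = (2 * sr - 1) * cos (pi / 8).
Proof.
have hp : 0 < cos (pi / 8 : R).
  apply: cos_gt0_pihalf; have hpi := pi_gt0 R; apply/andP; split; lra.
have := beta2; have := alphabeta; have := sr2 => h1 h2 h3.
apply: le_anti; apply/andP; split; nra.
Qed.

Definition cS : C := rc sr.
Definition cA : C := rc (alpha R).
Definition cB : C := rc (beta R).
Lemma cS_def : rc (Num.sqrt 2)^-1 = cS. Proof. by []. Qed.
Lemma rcM (x y : R) : rc (x * y) = rc x * rc y. Proof. exact: rmorphM. Qed.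
Lemma rc_half : rc (1/2) = 1/2 :> C.
Proof. by rewrite /rc fmorph_div rmorph1 rmorph_nat. Qed.
Lemma g3 : cS * cS - 1/2 = 0.
Proof. by rewrite /cS -rcM sr2 rc_half subrr. Qed.
Lemma g2 : cB * cB - (1 + cS)/2 = 0.
Proof. by rewrite /cB /cS -rcM /beta beta2 /rc fmorph_div rmorphD rmorph1 rmorph_nat subrr. Qed.
Lemma g1 : cA - (2 * cS - 1) * cB = 0.
Proof. by rewrite /cA /cB /cS /alpha /beta alpha_eq /rc rmorphM rmorphB rmorphM rmorph_nat rmorph1 subrr. Qed.
Lemma cSSE : cS * cS = 1/2. Proof. by apply/eqP; rewrite -subr_eq0 g3. Qed.
Lemma conj_cS : (conjc cS) = cS. Proof. exact: conjc_real. Qed.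
Lemma conj_cA : (conjc cA) = cA. Proof. exact: conjc_real. Qed.
Lemma conj_cB : (conjc cB) = cB. Proof. exact: conjc_real. Qed.
Lemma cos4 : rc (cos (pi / 4)) = cS. Proof. by rewrite cos_pi4. Qed.
Lemma sin4 : rc (sin (pi / 4)) = cS. Proof. by rewrite sin_pi4. Qed.
Lemma sin8 : rc (sin (pi / 8)) = cA. Proof. by []. Qed.
Lemma cos8 : rc (cos (pi / 8)) = cB. Proof. by []. Qed.


Lemma mx2_add a b c d a' b' c' d' :
  mx2 a b c d + mx2 a' b' c' d' = mx2 (a + a') (b + b') (c + c') (d + d').
Proof. apply/matrixP => i j; rewrite !mxE; cases; by rewrite ?eqxx ?e10. Qed.
Lemma mx2_sub a b c d a' b' c' d' :
  mx2 a b c d - mx2 a' b' c' d' = mx2 (a - a') (b - b') (c - c') (d - d').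
Proof. apply/matrixP => i j; rewrite !mxE; cases; by rewrite ?eqxx ?e10. Qed.
Lemma mx2_scale k a b c d : k *: mx2 a b c d = mx2 (k * a) (k * b) (k * c) (k * d).
Proof. apply/matrixP => i j; rewrite !mxE; cases; by rewrite ?eqxx ?e10. Qed.
Lemma cv2_add a b a' b' : cv2 a b + cv2 a' b' = cv2 (a + a') (b + b').
Proof. apply/matrixP => i j; rewrite !mxE; cases; by rewrite ?eqxx ?e10. Qed.
Lemma cv2_sub a b a' b' : cv2 a b - cv2 a' b' = cv2 (a - a') (b - b').
Proof. apply/matrixP => i j; rewrite !mxE; cases; by rewrite ?eqxx ?e10. Qed.
Lemma cv2_scale k a b : k *: cv2 a b = cv2 (k * a) (k * b).
Proof. apply/matrixP => i j; rewrite !mxE; cases; by rewrite ?eqxx ?e10. Qed.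
Lemma adj_cv2 x y : adj (cv2 x y) = rv2 (conjc x) (conjc y).
Proof. apply/matrixP => i j; rewrite !mxE; cases; by rewrite ?eqxx ?e10. Qed.
Lemma cv2_rv2 x y u v : cv2 x y *m rv2 u v = mx2 (x * u) (x * v) (y * u) (y * v).
Proof. apply/matrixP => i j; rewrite !mxE sum1 !mxE; cases; by rewrite ?eqxx ?e10. Qed.
Lemma cv2_inj a b a' b' : a = a' -> b = b' -> cv2 a b = cv2 a' b'.
Proof. by move=> -> ->. Qed.
Lemma mx2_inj a b c d a' b' c' d' : a = a' -> b = b' -> c = c' -> d = d' ->
  mx2 a b c d = mx2 a' b' c' d'.
Proof. by move=> -> -> -> ->. Qed.

Lemma ket0zE : ket0z R = cv2 1 0.
Proof. apply/matrixP => i j; rewrite !mxE; cases; by rewrite ?eqxx ?e10. Qed.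
Lemma ket1zE : ket1z R = cv2 0 1.
Proof. apply/matrixP => i j; rewrite !mxE; cases; by rewrite ?eqxx ?e10. Qed.
Lemma ket0xE : ket0x R = cv2 cS cS.
Proof. rewrite /ket0x ket0zE ket1zE cS_def cv2_add cv2_scale; apply: cv2_inj; ring. Qed.
Lemma ket1xE : ket1x R = cv2 cS (- cS).
Proof. rewrite /ket1x ket0zE ket1zE cS_def cv2_sub cv2_scale; apply: cv2_inj; ring. Qed.
Lemma phi0E : phi0 R = cv2 cB cA.
Proof.
rewrite /phi0 ket0xE ket1xE cv2_scale cv2_scale cv2_add -/cA -/cB.
have h1 := g1; have h3 := g3.
apply: cv2_inj.
  transitivity (cB + cS * (cA - (2 * cS - 1) * cB) + 2 * cB * (cS * cS - 1/2)).
    by field.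
  by rewrite h1 h3; ring.
transitivity (cA - (cS + 1) * (cA - (2 * cS - 1) * cB) - 2 * cB * (cS * cS - 1/2)).
  by field.
by rewrite h1 h3; ring.
Qed.
Lemma conj_NcS : (conjc (- cS)) = - cS.
Proof. by rewrite /cS -rmorphN conjc_real. Qed.
Ltac cert t := transitivity t; [by field | by rewrite ?g1 ?g2 ?g3; field].

Lemma RotE : Rot R = mx2 cS cS (- cS) cS.
Proof.
rewrite /Rot cos4 sin4 mx2_one ket0xE ket1xE !adj_cv2 conj_NcS conj_cS !cv2_rv2 mx2_sub !mx2_scale mx2_add.
apply: mx2_inj.
- by ring.
- cert (cS + 2 * cS * (cS * cS - 1/2)).
- cert (- cS - 2 * cS * (cS * cS - 1/2)).
- by ring.
Qed.

Ltac solve_s := first [ by field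
  | cert (1 + 2 * (cS * cS - 1/2)) | cert (-1 - 2 * (cS * cS - 1/2))
  | cert (cS + 2 * cS * (cS * cS - 1/2)) | cert (- cS - 2 * cS * (cS * cS - 1/2)) ].

Definition Rinv : 'M[C]_2 := mx2 cS (- cS) cS cS.
Lemma RotRinv : Rot R * Rinv = 1.
Proof. by rewrite RotE mx2_mulr mx2_1; apply: mx2_inj; solve_s. Qed.
Lemma RinvRot : Rinv * Rot R = 1.
Proof. by rewrite RotE mx2_mulr mx2_1; apply: mx2_inj; solve_s. Qed.
Lemma RotV : (Rot R)^-1 = Rinv.
Proof.
have U : Rot R \is a GRing.unit by apply/unitrP; exists Rinv; rewrite RotRinv RinvRot.
by rewrite -[(Rot R)^-1]mulr1 -RotRinv mulrA mulVr // mul1r.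
Qed.
Lemma RotVn k : Rot R ^- k = Rinv ^+ k.
Proof. by rewrite -exprVn RotV. Qed.
Lemma Rinv0 : Rinv ^+ 0 = mx2 1 0 0 1. Proof. by rewrite expr0 mx2_1. Qed.
Lemma Rinv1 : Rinv ^+ 1 = mx2 cS (- cS) cS cS. Proof. by rewrite expr1. Qed.
Lemma Rinv2 : Rinv ^+ 2 = mx2 0 (-1) 1 0.
Proof. by rewrite expr2 /Rinv mx2_mulr; apply: mx2_inj; solve_s. Qed.
Lemma Rinv3 : Rinv ^+ 3 = mx2 (- cS) (- cS) cS (- cS).
Proof. by rewrite exprS Rinv2 /Rinv mx2_mulr; apply: mx2_inj; solve_s. Qed.
Lemma Rot0 : Rot R ^+ 0 = mx2 1 0 0 1. Proof. by rewrite expr0 mx2_1. Qed.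
Lemma Rot1 : Rot R ^+ 1 = mx2 cS cS (- cS) cS. Proof. by rewrite expr1 RotE. Qed.
Lemma Rot2 : Rot R ^+ 2 = mx2 0 1 (-1) 0.
Proof. by rewrite expr2 RotE mx2_mulr; apply: mx2_inj; solve_s. Qed.
Lemma Rot3 : Rot R ^+ 3 = mx2 (- cS) cS (- cS) (- cS).
Proof. by rewrite exprS Rot2 RotE mx2_mulr; apply: mx2_inj; solve_s. Qed.
Lemma phi0' : phi R 0 = cv2 cB cA.
Proof. by rewrite /phi RotVn Rinv0 phi0E mx2_cv2; apply: cv2_inj; ring. Qed.
Lemma phi1' : phi R 1 = cv2 cA cB.
Proof.
rewrite /phi RotVn Rinv1 phi0E mx2_cv2; apply: cv2_inj.
- cert (cA - (cS + 1) * (cA - (2 * cS - 1) * cB) - 2 * cB * (cS * cS - 1/2)).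
- cert (cB + cS * (cA - (2 * cS - 1) * cB) + 2 * cB * (cS * cS - 1/2)).
Qed.
Lemma FiltE : Filt R = mx2 ((cA + cB) / 2) ((cA - cB) / 2) ((cA - cB) / 2) ((cA + cB) / 2).
Proof.
rewrite /Filt sin8 cos8 ket0xE ket1xE !adj_cv2 conj_NcS conj_cS !cv2_rv2 !mx2_scale mx2_add.
apply: mx2_inj.
- cert ((cA + cB) / 2 + (cA + cB) * (cS * cS - 1/2)).
- cert ((cA - cB) / 2 + (cA - cB) * (cS * cS - 1/2)).
- cert ((cA - cB) / 2 + (cA - cB) * (cS * cS - 1/2)).
- cert ((cA + cB) / 2 + (cA + cB) * (cS * cS - 1/2)).
Qed.

Lemma adjM m n p (A : 'M[C]_(m, n)) (B : 'M[C]_(n, p)) : adj (A *m B) = adj B *m adj A.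
Proof. by rewrite /adj map_mxM trmx_mul. Qed.
Lemma adjK m n (A : 'M[C]_(m, n)) : adj (adj A) = A.
Proof. by apply/matrixP => i j; rewrite !mxE conjcK. Qed.
Lemma adjD m n (A B : 'M[C]_(m, n)) : adj (A + B) = adj A + adj B.
Proof. by apply/matrixP => i j; rewrite !mxE rmorphD. Qed.
Lemma adjB m n (A B : 'M[C]_(m, n)) : adj (A - B) = adj A - adj B.
Proof. by apply/matrixP => i j; rewrite !mxE rmorphB. Qed.
Lemma adjZ m n k (A : 'M[C]_(m, n)) : adj (k *: A) = (conjc k) *: adj A.
Proof. by apply/matrixP => i j; rewrite !mxE rmorphM. Qed.
Lemma adj_tens m n p q (A : 'M[C]_(m, n)) (B : 'M[C]_(p, q)) : adj (A *t B) = adj A *t adj B.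
Proof. by apply/matrixP => i j; rewrite !mxE rmorphM. Qed.
Lemma tens11 (P Q : 'M[C]_(1, 1)) : (P *t Q) 0 0 = P 0 0 * Q 0 0.
Proof. by rewrite !mxE !(ord1 (_.1)) !(ord1 (_.2)). Qed.
Lemma amp_tens (x y e f : 'cV[C]_2) (N : 'M[C]_2) :
  (adj (x *t y) *m (1%:M *t N) *m (e *t f)) 0 0 = (adj x *m e) 0 0 * (adj y *m N *m f) 0 0.
Proof. by rewrite adj_tens !tensmx_mul mulmx1 tens11. Qed.

Definition amp (v : 'M[C]_(2 * 2, 1 * 1)) (k : nat) (M : 'M[C]_2) : C :=
  (adj v *m ((1%:M : 'M[C]_2) *t (Filt R *m Rot R ^- k *m M *m Rot R ^+ k)) *m PsiAB R) 0 0.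

Lemma addE m n (A B : 'M[C]_(m, n)) i j : (A + B) i j = A i j + B i j.
Proof. by rewrite mxE. Qed.
Lemma subE m n (A B : 'M[C]_(m, n)) i j : (A - B) i j = A i j - B i j.
Proof. by rewrite !mxE. Qed.
Lemma scaleE m n (A : 'M[C]_(m, n)) a i j : (a *: A) i j = a * A i j.
Proof. by rewrite mxE. Qed.
Lemma ww (w : 'M[C]_(1, 1)) : (w *m adj w) 0 0 = w 0 0 * (conjc (w 0 0)).
Proof. by rewrite mxE sum1 !mxE. Qed.

Lemma expect_rho (I : finType) (E : I -> 'M[C]_2) (v : 'M[C]_(2 * 2, 1 * 1)) :
  expect v (rho E) = \sum_(k < 4) \sum_(f : I) amp v k (E f) * (conjc (amp v k (E f))).
Proof.
rewrite /expect /rho mulmx_sumr mulmx_suml summxE; apply: eq_bigr => k _.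
rewrite mulmx_sumr mulmx_suml summxE; apply: eq_bigr => f _.
cbv zeta; rewrite /amp -ww; congr (_ _ _).
by rewrite !adjM adjK !mulmxA.
Qed.
Lemma amp_abs (x1 y1 x2 y2 e1 f1 e2 f2 : 'cV[C]_2) (N : 'M[C]_2) (c d : C) :
  (adj (c *: (x1 *t y1 + x2 *t y2)) *m (1%:M *t N) *m (d *: (e1 *t f1 + e2 *t f2))) 0 0
  = (conjc c) * d * ((adj x1 *m e1) 0 0 * (adj y1 *m N *m f1) 0 0 + (adj x1 *m e2) 0 0 * (adj y1 *m N *m f2) 0 0
     + ((adj x2 *m e1) 0 0 * (adj y2 *m N *m f1) 0 0 + (adj x2 *m e2) 0 0 * (adj y2 *m N *m f2) 0 0)).
Proof.
rewrite adjZ adjD -!scalemxAl -!scalemxAr !mulmxDl !mulmxDr !adj_tens !tensmx_mul !mulmx1.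
move: (adj x1 *m e1) (adj x1 *m e2) (adj x2 *m e1) (adj x2 *m e2) => a1 a2 a3 a4.
move: (adj y1 *m N *m f1) (adj y1 *m N *m f2) (adj y2 *m N *m f1) (adj y2 *m N *m f2) => b1 b2 b3 b4.
by rewrite !mxE !(ord1 (_.1)) !(ord1 (_.2)) mulrA.
Qed.

Lemma amp_abs_sub (x1 y1 x2 y2 e1 f1 e2 f2 : 'cV[C]_2) (N : 'M[C]_2) (c d : C) :
  (adj (c *: (x1 *t y1 - x2 *t y2)) *m (1%:M *t N) *m (d *: (e1 *t f1 + e2 *t f2))) 0 0
  = (conjc c) * d * ((adj x1 *m e1) 0 0 * (adj y1 *m N *m f1) 0 0 + (adj x1 *m e2) 0 0 * (adj y1 *m N *m f2) 0 0
     - ((adj x2 *m e1) 0 0 * (adj y2 *m N *m f1) 0 0 + (adj x2 *m e2) 0 0 * (adj y2 *m N *m f2) 0 0)).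
Proof.
rewrite adjZ adjB -!scalemxAl -!scalemxAr !mulmxBl ?mulmxDl !mulmxDr !adj_tens !tensmx_mul !mulmx1.
move: (adj x1 *m e1) (adj x1 *m e2) (adj x2 *m e1) (adj x2 *m e2) => a1 a2 a3 a4.
move: (adj y1 *m N *m f1) (adj y1 *m N *m f2) (adj y2 *m N *m f1) (adj y2 *m N *m f2) => b1 b2 b3 b4.
by rewrite !mxE !(ord1 (_.1)) !(ord1 (_.2)) mulrA.
Qed.

Lemma ip x y u v : (adj (cv2 x y) *m cv2 u v) 0 0 = (conjc x) * u + (conjc y) * v.
Proof. by rewrite adj_cv2 rv2_cv2. Qed.
Lemma ipN x y (N : 'M[C]_2) u v : (adj (cv2 x y) *m N *m cv2 u v) 0 0 =
  (conjc x) * (N 0 0 * u + N 0 1 * v) + (conjc y) * (N 1 0 * u + N 1 1 * v).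
Proof. by rewrite adj_cv2 {1}(mx2_eta N) rv2_mx2 rv2_cv2; ring. Qed.

Lemma ampX0 a b c d : amp (PsiP R) 0 (mx2 a b c d) = ((1/4) * c + (1/4) * b).
Proof.
rewrite /amp /PsiP /PsiAB cS_def ket0zE ket1zE amp_abs.
rewrite phi0' phi1' RotVn Rinv0 Rot0 FiltE !mx2_mul !adj_cv2 !rv2_mx2 !rv2_cv2 conj_cS conjc1 conjc0.
cert (((1/4) * c + (1/4) * b) + ((1/2) * cB * cS * cS * d - (1/2) * cB * cS * cS * c - (1/2) * cB * cS * cS * b + (1/2) * cB * cS * cS * a + (1) * cB * cS * cS * cS * d + (1) * cB * cS * cS * cS * c + (1) * cB * cS * cS * cS * b + (1) * cB * cS * cS * cS * a + (1/2) * cA * cS * cS * d + (1/2) * cA * cS * cS * c + (1/2) * cA * cS * cS * b + (1/2) * cA * cS * cS * a) * (cA - (2 * cS - 1) * cB) + (- (1) * cS * cS * d + (1) * cS * cS * c + (1) * cS * cS * b - (1) * cS * cS * a - (2) * cS * cS * cS * c - (2) * cS * cS * cS * b + (2) * cS * cS * cS * cS * d + (2) * cS * cS * cS * cS * c + (2) * cS * cS * cS * cS * b + (2) * cS * cS * cS * cS * a) * (cB * cB - (1 + cS)/2) + ((1/2) * c + (1/2) * b + (1) * cS * cS * d + (1) * cS * cS * a + (1) * cS * cS * cS * d + (1) * cS * cS * cS * c + (1) * cS * cS * cS * b + (1) * cS * cS * cS * a) * (cS * cS - 1/2)).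
Qed.

Lemma ampX1 a b c d : amp (PsiP R) 1 (mx2 a b c d) = (- (1/4) * d + (1/4) * a).
Proof.
rewrite /amp /PsiP /PsiAB cS_def ket0zE ket1zE amp_abs.
rewrite phi0' phi1' RotVn Rinv1 Rot1 FiltE !mx2_mul !adj_cv2 !rv2_mx2 !rv2_cv2 conj_cS conjc1 conjc0.
cert ((- (1/4) * d + (1/4) * a) + ((2) * cB * cS * cS * cS * cS * d + (4) * cB * cS * cS * cS * cS * cS * a + (2) * cA * cS * cS * cS * cS * a) * (cA - (2 * cS - 1) * cB) + (- (4) * cS * cS * cS * cS * d + (4) * cS * cS * cS * cS * cS * d - (4) * cS * cS * cS * cS * cS * a + (8) * cS * cS * cS * cS * cS * cS * a) * (cB * cB - (1 + cS)/2) + (- (1/2) * d + (1/2) * a - (1) * cS * cS * d + (1) * cS * cS * a + (2) * cS * cS * cS * cS * d + (2) * cS * cS * cS * cS * a + (4) * cS * cS * cS * cS * cS * a) * (cS * cS - 1/2)).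
Qed.

Lemma ampX2 a b c d : amp (PsiP R) 2 (mx2 a b c d) = (- (1/4) * c - (1/4) * b).
Proof.
rewrite /amp /PsiP /PsiAB cS_def ket0zE ket1zE amp_abs.
rewrite phi0' phi1' RotVn Rinv2 Rot2 FiltE !mx2_mul !adj_cv2 !rv2_mx2 !rv2_cv2 conj_cS conjc1 conjc0.
cert ((- (1/4) * c - (1/4) * b) + ((1/2) * cB * cS * cS * d + (1/2) * cB * cS * cS * c + (1/2) * cB * cS * cS * b + (1/2) * cB * cS * cS * a + (1) * cB * cS * cS * cS * d - (1) * cB * cS * cS * cS * c - (1) * cB * cS * cS * cS * b + (1) * cB * cS * cS * cS * a + (1/2) * cA * cS * cS * d - (1/2) * cA * cS * cS * c - (1/2) * cA * cS * cS * b + (1/2) * cA * cS * cS * a) * (cA - (2 * cS - 1) * cB) + (- (1) * cS * cS * d - (1) * cS * cS * c - (1) * cS * cS * b - (1) * cS * cS * a + (2) * cS * cS * cS * c + (2) * cS * cS * cS * b + (2) * cS * cS * cS * cS * d - (2) * cS * cS * cS * cS * c - (2) * cS * cS * cS * cS * b + (2) * cS * cS * cS * cS * a) * (cB * cB - (1 + cS)/2) + (- (1/2) * c - (1/2) * b + (1) * cS * cS * d + (1) * cS * cS * a + (1) * cS * cS * cS * d - (1) * cS * cS * cS * c - (1) * cS * cS * cS * b + (1) * cS * cS * cS * a) * (cS * cS - 1/2)).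
Qed.

Lemma ampX3 a b c d : amp (PsiP R) 3 (mx2 a b c d) = ((1/4) * d - (1/4) * a).
Proof.
rewrite /amp /PsiP /PsiAB cS_def ket0zE ket1zE amp_abs.
rewrite phi0' phi1' RotVn Rinv3 Rot3 FiltE !mx2_mul !adj_cv2 !rv2_mx2 !rv2_cv2 conj_cS conjc1 conjc0.
cert (((1/4) * d - (1/4) * a) + ((2) * cB * cS * cS * cS * cS * a + (4) * cB * cS * cS * cS * cS * cS * d + (2) * cA * cS * cS * cS * cS * d) * (cA - (2 * cS - 1) * cB) + (- (4) * cS * cS * cS * cS * a - (4) * cS * cS * cS * cS * cS * d + (4) * cS * cS * cS * cS * cS * a + (8) * cS * cS * cS * cS * cS * cS * d) * (cB * cB - (1 + cS)/2) + ((1/2) * d - (1/2) * a + (1) * cS * cS * d - (1) * cS * cS * a + (2) * cS * cS * cS * cS * d + (2) * cS * cS * cS * cS * a + (4) * cS * cS * cS * cS * cS * d) * (cS * cS - 1/2)).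
Qed.

Lemma ampY0 a b c d : amp (PsiM R) 0 (mx2 a b c d) = ((1/4) * d - (1/4) * a + (1/2) * cS * c - (1/2) * cS * b).
Proof.
rewrite /amp /PsiM /PsiAB cS_def ket0zE ket1zE amp_abs_sub.
rewrite phi0' phi1' RotVn Rinv0 Rot0 FiltE !mx2_mul !adj_cv2 !rv2_mx2 !rv2_cv2 conj_cS conjc1 conjc0.
cert (((1/4) * d - (1/4) * a + (1/2) * cS * c - (1/2) * cS * b) + (- (1/2) * cB * cS * cS * d + (3/2) * cB * cS * cS * c - (3/2) * cB * cS * cS * b + (1/2) * cB * cS * cS * a + (1) * cB * cS * cS * cS * d - (1) * cB * cS * cS * cS * c + (1) * cB * cS * cS * cS * b - (1) * cB * cS * cS * cS * a + (1/2) * cA * cS * cS * d - (1/2) * cA * cS * cS * c + (1/2) * cA * cS * cS * b - (1/2) * cA * cS * cS * a) * (cA - (2 * cS - 1) * cB) + ((1) * cS * cS * d - (1) * cS * cS * c + (1) * cS * cS * b - (1) * cS * cS * a - (2) * cS * cS * cS * d + (4) * cS * cS * cS * c - (4) * cS * cS * cS * b + (2) * cS * cS * cS * a + (2) * cS * cS * cS * cS * d - (2) * cS * cS * cS * cS * c + (2) * cS * cS * cS * cS * b - (2) * cS * cS * cS * cS * a) * (cB * cB - (1 + cS)/2) + ((1/2) * d - (1/2) * a + (1) * cS * c - (1) * cS * b + (1) * cS * cS * c - (1) * cS * cS * b + (1) * cS * cS * cS * d - (1) * cS * cS * cS * c + (1) * cS * cS * cS * b - (1) * cS * cS * cS * a)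 * (cS * cS - 1/2)).
Qed.

Lemma ampY1 a b c d : amp (PsiM R) 1 (mx2 a b c d) = ((1/4) * c + (1/4) * b + (1/2) * cS * c - (1/2) * cS * b).
Proof.
rewrite /amp /PsiM /PsiAB cS_def ket0zE ket1zE amp_abs_sub.
rewrite phi0' phi1' RotVn Rinv1 Rot1 FiltE !mx2_mul !adj_cv2 !rv2_mx2 !rv2_cv2 conj_cS conjc1 conjc0.
cert (((1/4) * c + (1/4) * b + (1/2) * cS * c - (1/2) * cS * b) + ((2) * cB * cS * cS * cS * cS * c - (4) * cB * cS * cS * cS * cS * b + (4) * cB * cS * cS * cS * cS * cS * b + (2) * cA * cS * cS * cS * cS * b) * (cA - (2 * cS - 1) * cB) + ((4) * cS * cS * cS * cS * b + (4) * cS * cS * cS * cS * cS * c - (12) * cS * cS * cS * cS * cS * b + (8) * cS * cS * cS * cS * cS * cS * b) * (cB * cB - (1 + cS)/2) + ((1/2) * c + (1/2) * b + (1) * cS * c - (1) * cS * b + (1) * cS * cS * c + (1) * cS * cS * b + (2) * cS * cS * cS * c - (2) * cS * cS * cS * b + (2) * cS * cS * cS * cS * c - (2) * cS * cS * cS * cS * b + (4) * cS * cS * cS * cS * cS * b) * (cS * cS - 1/2)).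
Qed.

Lemma ampY2 a b c d : amp (PsiM R) 2 (mx2 a b c d) = (- (1/4) * d + (1/4) * a + (1/2) * cS * c - (1/2) * cS * b).
Proof.
rewrite /amp /PsiM /PsiAB cS_def ket0zE ket1zE amp_abs_sub.
rewrite phi0' phi1' RotVn Rinv2 Rot2 FiltE !mx2_mul !adj_cv2 !rv2_mx2 !rv2_cv2 conj_cS conjc1 conjc0.
cert ((- (1/4) * d + (1/4) * a + (1/2) * cS * c - (1/2) * cS * b) + ((1/2) * cB * cS * cS * d + (3/2) * cB * cS * cS * c - (3/2) * cB * cS * cS * b - (1/2) * cB * cS * cS * a - (1) * cB * cS * cS * cS * d - (1) * cB * cS * cS * cS * c + (1) * cB * cS * cS * cS * b + (1) * cB * cS * cS * cS * a - (1/2) * cA * cS * cS * d - (1/2) * cA * cS * cS * c + (1/2) * cA * cS * cS * b + (1/2) * cA * cS * cS * a) * (cA - (2 * cS - 1) * cB) + (- (1) * cS * cS * d - (1) * cS * cS * c + (1) * cS * cS * b + (1) * cS * cS * a + (2) * cS * cS * cS * d + (4) * cS * cS * cS * c - (4) * cS * cS * cS * b - (2) * cS * cS * cS * a - (2) * cS * cS * cS * cS * d - (2) * cS * cS * cS * cS * c + (2) * cS * cS * cS * cS * b + (2) * cS * cS * cS * cS * a) * (cB * cB - (1 + cS)/2) + (- (1/2) * d + (1/2) * a + (1) * cS * c - (1) * cS * b + (1) * cS * cS * c - (1) * cS * cS * b - (1) * cS * cS * cS * d - (1) * cS * cS * cS * c + (1) * cS * cS * cS * b + (1) * cS * cS *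 cS * a) * (cS * cS - 1/2)).
Qed.

Lemma ampY3 a b c d : amp (PsiM R) 3 (mx2 a b c d) = (- (1/4) * c - (1/4) * b + (1/2) * cS * c - (1/2) * cS * b).
Proof.
rewrite /amp /PsiM /PsiAB cS_def ket0zE ket1zE amp_abs_sub.
rewrite phi0' phi1' RotVn Rinv3 Rot3 FiltE !mx2_mul !adj_cv2 !rv2_mx2 !rv2_cv2 conj_cS conjc1 conjc0.
cert ((- (1/4) * c - (1/4) * b + (1/2) * cS * c - (1/2) * cS * b) + ((4) * cB * cS * cS * cS * cS * c - (2) * cB * cS * cS * cS * cS * b - (4) * cB * cS * cS * cS * cS * cS * c - (2) * cA * cS * cS * cS * cS * c) * (cA - (2 * cS - 1) * cB) + (- (4) * cS * cS * cS * cS * c + (12) * cS * cS * cS * cS * cS * c - (4) * cS * cS * cS * cS * cS * b - (8) * cS * cS * cS * cS * cS * cS * c) * (cB * cB - (1 + cS)/2) + (- (1/2) * c - (1/2) * b + (1) * cS * c - (1) * cS * b - (1) * cS * cS * c - (1) * cS * cS * b + (2) * cS * cS * cS * c - (2) * cS * cS * cS * b + (2) * cS * cS * cS * cS * c - (2) * cS * cS * cS * cS * b - (4) * cS * cS * cS * cS * cS * c) * (cS * cS - 1/2)).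
Qed.

Lemma ampZ0 a b c d : amp (PhiM R) 0 (mx2 a b c d) = (- (1/4) * c + (1/4) * b - (1/2) * cS * d + (1/2) * cS * a).
Proof.
rewrite /amp /PhiM /PsiAB cS_def ket0zE ket1zE amp_abs_sub.
rewrite phi0' phi1' RotVn Rinv0 Rot0 FiltE !mx2_mul !adj_cv2 !rv2_mx2 !rv2_cv2 conj_cS conjc1 conjc0.
cert ((- (1/4) * c + (1/4) * b - (1/2) * cS * d + (1/2) * cS * a) + (- (3/2) * cB * cS * cS * d + (1/2) * cB * cS * cS * c - (1/2) * cB * cS * cS * b + (3/2) * cB * cS * cS * a + (1) * cB * cS * cS * cS * d - (1) * cB * cS * cS * cS * c + (1) * cB * cS * cS * cS * b - (1) * cB * cS * cS * cS * a + (1/2) * cA * cS * cS * d - (1/2) * cA * cS * cS * c + (1/2) * cA * cS * cS * b - (1/2) * cA * cS * cS * a) * (cA - (2 * cS - 1) * cB) + ((1) * cS * cS * d - (1) * cS * cS * c + (1) * cS * cS * b - (1) * cS * cS * a - (4) * cS * cS * cS * d + (2) * cS * cS * cS * c - (2) * cS * cS * cS * b + (4) * cS * cS * cS * a + (2) * cS * cS * cS * cS * d - (2) * cS * cS * cS * cS * c + (2) * cS * cS * cS * cS * b - (2) * cS * cS * cS * cS * a) * (cB * cB - (1 + cS)/2) + (- (1/2) * c + (1/2) * b - (1) * cS * d + (1) * cS * a - (1) * cS * cS * d + (1) * cS * cS * a + (1) * cS * cS * cS * d - (1) * cS * cS * cS * c + (1) * cS * cS * cS * b - (1) * cS * cS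 * cS * a) * (cS * cS - 1/2)).
Qed.

Lemma ampZ1 a b c d : amp (PhiM R) 1 (mx2 a b c d) = (- (1/4) * c + (1/4) * b - (1/2) * cS * c - (1/2) * cS * b).
Proof.
rewrite /amp /PhiM /PsiAB cS_def ket0zE ket1zE amp_abs_sub.
rewrite phi0' phi1' RotVn Rinv1 Rot1 FiltE !mx2_mul !adj_cv2 !rv2_mx2 !rv2_cv2 conj_cS conjc1 conjc0.
cert ((- (1/4) * c + (1/4) * b - (1/2) * cS * c - (1/2) * cS * b) + (- (2) * cB * cS * cS * cS * cS * c - (4) * cB * cS * cS * cS * cS * b + (4) * cB * cS * cS * cS * cS * cS * b + (2) * cA * cS * cS * cS * cS * b) * (cA - (2 * cS - 1) * cB) + ((4) * cS * cS * cS * cS * b - (4) * cS * cS * cS * cS * cS * c - (12) * cS * cS * cS * cS * cS * b + (8) * cS * cS * cS * cS * cS * cS * b) * (cB * cB - (1 + cS)/2) + (- (1/2) * c + (1/2) * b - (1) * cS * c - (1) * cS * b - (1) * cS * cS * c + (1) * cS * cS * b - (2) * cS * cS * cS * c - (2) * cS * cS * cS * b - (2) * cS * cS * cS * cS * c - (2) * cS * cS * cS * cS * b + (4) * cS * cS * cS * cS * cS * b) * (cS * cS - 1/2)).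
Qed.

Lemma ampZ2 a b c d : amp (PhiM R) 2 (mx2 a b c d) = (- (1/4) * c + (1/4) * b + (1/2) * cS * d - (1/2) * cS * a).
Proof.
rewrite /amp /PhiM /PsiAB cS_def ket0zE ket1zE amp_abs_sub.
rewrite phi0' phi1' RotVn Rinv2 Rot2 FiltE !mx2_mul !adj_cv2 !rv2_mx2 !rv2_cv2 conj_cS conjc1 conjc0.
cert ((- (1/4) * c + (1/4) * b + (1/2) * cS * d - (1/2) * cS * a) + ((3/2) * cB * cS * cS * d + (1/2) * cB * cS * cS * c - (1/2) * cB * cS * cS * b - (3/2) * cB * cS * cS * a - (1) * cB * cS * cS * cS * d - (1) * cB * cS * cS * cS * c + (1) * cB * cS * cS * cS * b + (1) * cB * cS * cS * cS * a - (1/2) * cA * cS * cS * d - (1/2) * cA * cS * cS * c + (1/2) * cA * cS * cS * b + (1/2) * cA * cS * cS * a) * (cA - (2 * cS - 1) * cB) + (- (1) * cS * cS * d - (1) * cS * cS * c + (1) * cS * cS * b + (1) * cS * cS * a + (4) * cS * cS * cS * d + (2) * cS * cS * cS * c - (2) * cS * cS * cS * b - (4) * cS * cS * cS * a - (2) * cS * cS * cS * cS * d - (2) * cS * cS * cS * cS * c + (2) * cS * cS * cS * cS * b + (2) * cS * cS * cS * cS * a) * (cB * cB - (1 + cS)/2) + (- (1/2) * c + (1/2) * b + (1) * cS * d - (1) * cS * a + (1) * cS * cS * d - (1) * cS * cS * a - (1) * cS * cS * cS * d - (1) * cS * cS * cS * c + (1) * cS * cS * cS * b + (1) * cS * cS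 * cS * a) * (cS * cS - 1/2)).
Qed.

Lemma ampZ3 a b c d : amp (PhiM R) 3 (mx2 a b c d) = (- (1/4) * c + (1/4) * b + (1/2) * cS * c + (1/2) * cS * b).
Proof.
rewrite /amp /PhiM /PsiAB cS_def ket0zE ket1zE amp_abs_sub.
rewrite phi0' phi1' RotVn Rinv3 Rot3 FiltE !mx2_mul !adj_cv2 !rv2_mx2 !rv2_cv2 conj_cS conjc1 conjc0.
cert ((- (1/4) * c + (1/4) * b + (1/2) * cS * c + (1/2) * cS * b) + ((4) * cB * cS * cS * cS * cS * c + (2) * cB * cS * cS * cS * cS * b - (4) * cB * cS * cS * cS * cS * cS * c - (2) * cA * cS * cS * cS * cS * c) * (cA - (2 * cS - 1) * cB) + (- (4) * cS * cS * cS * cS * c + (12) * cS * cS * cS * cS * cS * c + (4) * cS * cS * cS * cS * cS * b - (8) * cS * cS * cS * cS * cS * cS * c) * (cB * cB - (1 + cS)/2) + (- (1/2) * c + (1/2) * b + (1) * cS * c + (1) * cS * b - (1) * cS * cS * c + (1) * cS * cS * b + (2) * cS * cS * cS * c + (2) * cS * cS * cS * b + (2) * cS * cS * cS * cS * c + (2) * cS * cS * cS * cS * b - (4) * cS * cS * cS * cS * cS * c) * (cS * cS - 1/2)).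
Qed.

Lemma cjD (x y : C) : conjc (x + y) = conjc x + conjc y. Proof. exact: rmorphD. Qed.
Lemma cjB (x y : C) : conjc (x - y) = conjc x - conjc y. Proof. exact: rmorphB. Qed.
Lemma cjN (x : C) : conjc (- x) = - conjc x. Proof. exact: rmorphN. Qed.
Lemma cjM (x y : C) : conjc (x * y) = conjc x * conjc y. Proof. exact: rmorphM. Qed.
Lemma cjV (x : C) : conjc (x^-1) = (conjc x)^-1. Proof. exact: conjc_inv. Qed.
Lemma cjn n : conjc (n%:R : C) = n%:R. Proof. exact: conjc_nat. Qed.
Lemma cj1 : conjc (1 : C) = 1. Proof. exact: conjc1. Qed.
Lemma sum4 (F : nat -> C) : \sum_(k < 4) F k = F 0%N + F 1%N + F 2%N + F 3%N.
Proof. by rewrite !big_ord_recr big_ord0 /= add0r. Qed.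
Lemma sumX a b c d : \sum_(k < 4) amp (PsiP R) k (mx2 a b c d) * conjc (amp (PsiP R) k (mx2 a b c d)) =
  (1/8) * ((a - d) * conjc (a - d) + (b + c) * conjc (b + c)).
Proof.
rewrite (sum4 (fun k => amp (PsiP R) k (mx2 a b c d) * conjc (amp (PsiP R) k (mx2 a b c d)))); cbv beta.
rewrite ampX0 ampX1 ampX2 ampX3.
rewrite !(cjD, cjB, cjN, cjM, cjV, cjn, cj1, conj_cS).
cert (((1/8) * d * (conjc d) - (1/8) * d * (conjc a) + (1/8) * c * (conjc c) + (1/8) * c * (conjc b) + (1/8) * b * (conjc c) + (1/8) * b * (conjc b) - (1/8) * a * (conjc d) + (1/8) * a * (conjc a))).
Qed.

Lemma sumY a b c d : \sum_(k < 4) amp (PsiM R) k (mx2 a b c d) * conjc (amp (PsiM R) k (mx2 a b c d)) =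
  (1/8) * ((a - d) * conjc (a - d) + (b + c) * conjc (b + c)) + (1/2) * ((b - c) * conjc (b - c)).
Proof.
rewrite (sum4 (fun k => amp (PsiM R) k (mx2 a b c d) * conjc (amp (PsiM R) k (mx2 a b c d)))); cbv beta.
rewrite ampY0 ampY1 ampY2 ampY3.
rewrite !(cjD, cjB, cjN, cjM, cjV, cjn, cj1, conj_cS).
cert (((1/8) * d * (conjc d) - (1/8) * d * (conjc a) + (5/8) * c * (conjc c) - (3/8) * c * (conjc b) - (3/8) * b * (conjc c) + (5/8) * b * (conjc b) - (1/8) * a * (conjc d) + (1/8) * a * (conjc a)) + ((1) * c * (conjc c) - (1) * c * (conjc b) - (1) * b * (conjc c) + (1) * b * (conjc b)) * (cS * cS - 1/2)).
Qed.

Lemma sumZ a b c d : \sum_(k < 4) amp (PhiM R) k (mx2 a b c d) * conjc (amp (PhiM R) k (mx2 a b c d)) =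
  (1/4) * ((a - d) * conjc (a - d) + (b + c) * conjc (b + c) + (b - c) * conjc (b - c)).
Proof.
rewrite (sum4 (fun k => amp (PhiM R) k (mx2 a b c d) * conjc (amp (PhiM R) k (mx2 a b c d)))); cbv beta.
rewrite ampZ0 ampZ1 ampZ2 ampZ3.
rewrite !(cjD, cjB, cjN, cjM, cjV, cjn, cj1, conj_cS).
cert (((1/4) * d * (conjc d) - (1/4) * d * (conjc a) + (1/2) * c * (conjc c) + (1/2) * b * (conjc b) - (1/4) * a * (conjc d) + (1/4) * a * (conjc a)) + ((1/2) * d * (conjc d) - (1/2) * d * (conjc a) + (1/2) * c * (conjc c) + (1/2) * c * (conjc b) + (1/2) * b * (conjc c) + (1/2) * b * (conjc b) - (1/2) * a * (conjc d) + (1/2) * a * (conjc a)) * (cS * cS - 1/2)).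
Qed.

End Helpers.

Lemma expX (R : realType) (I : finType) (E : I -> 'M[R[i]]_2) :
  expect (PsiP R) (rho E) = \sum_(f : I)
    (1/8) * ((E f 0 0 - E f 1 1) * conjc (E f 0 0 - E f 1 1) + (E f 0 1 + E f 1 0) * conjc (E f 0 1 + E f 1 0)).
Proof.
rewrite expect_rho exchange_big; apply: eq_bigr => f _.
by have := @sumX R (E f 0 0) (E f 0 1) (E f 1 0) (E f 1 1); rewrite -mx2_eta.
Qed.
Lemma expY (R : realType) (I : finType) (E : I -> 'M[R[i]]_2) :
  expect (PsiM R) (rho E) = \sum_(f : I)
    ((1/8) * ((E f 0 0 - E f 1 1) * conjc (E f 0 0 - E f 1 1) + (E f 0 1 + E f 1 0) * conjc (E f 0 1 + E f 1 0))
     + (1/2) * ((E f 0 1 - E f 1 0) * conjc (E f 0 1 - E f 1 0))).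
Proof.
rewrite expect_rho exchange_big; apply: eq_bigr => f _.
by have := @sumY R (E f 0 0) (E f 0 1) (E f 1 0) (E f 1 1); rewrite -mx2_eta.
Qed.
Lemma expZ (R : realType) (I : finType) (E : I -> 'M[R[i]]_2) :
  expect (PhiM R) (rho E) = \sum_(f : I)
    (1/4) * ((E f 0 0 - E f 1 1) * conjc (E f 0 0 - E f 1 1) + (E f 0 1 + E f 1 0) * conjc (E f 0 1 + E f 1 0)
      + (E f 0 1 - E f 1 0) * conjc (E f 0 1 - E f 1 0)).
Proof.
rewrite expect_rho exchange_big; apply: eq_bigr => f _.
by have := @sumZ R (E f 0 0) (E f 0 1) (E f 1 0) (E f 1 1); rewrite -mx2_eta.
Qed.
Lemma cc_ge0 (R : realType) (x : R[i]) : 0 <= x * conjc x.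
Proof. exact: mul_conjC_ge0. Qed.

Theorem theorem1 (R : realType) (I : finType) (E : I -> 'M[R[i]]_2) :
  let rh := rho E in
  0 < \tr rh ->
  let pX := expect (PsiP R) rh / \tr rh in
  let pZ := expect (PhiM R) rh / \tr rh in
  let pY := expect (PsiM R) rh / \tr rh in
  let eb := pX + pY in
  let a := pY in
  [/\ pX = eb - a, pZ = 3 / 2 * eb - a, pY = a & eb / 2 <= a <= eb].
Proof.
move=> rh ht pX pZ pY eb a.
have hX := @expX R I E; have hY := @expY R I E; have hZ := @expZ R I E.
have hZXY : expect (PhiM R) rh = 3/2 * expect (PsiP R) rh + 1/2 * expect (PsiM R) rh.
  rewrite /rh hX hY hZ !mulr_sumr -big_split /=; apply: eq_bigr => f _.
  by field.
have hYX : expect (PsiM R) rh - expect (PsiP R) rh = \sum_(f : I) (1/2) * ((E f 0 1 - E f 1 0) * conjc (E f 0 1 - E f 1 0)).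
  rewrite /rh hX hY -sumrB; apply: eq_bigr => f _; ring.
have X0 : 0 <= expect (PsiP R) rh.
  rewrite /rh hX; apply: sumr_ge0 => f _; apply: mulr_ge0; first by rewrite divr_ge0 ?ler0n.
  by apply: addr_ge0; apply: cc_ge0.
have YX0 : 0 <= expect (PsiM R) rh - expect (PsiP R) rh.
  rewrite hYX; apply: sumr_ge0 => f _; apply: mulr_ge0; first by rewrite divr_ge0 ?ler0n.
  by apply: cc_ge0.
have t0 : \tr rh != 0 by rewrite gt_eqF.
have ti : 0 <= (\tr rh)^-1 by rewrite invr_ge0 ltW.
split.
- by rewrite /eb /a addrK.
- by rewrite /pZ /eb /a /pX /pY hZXY; field.
- by [].
- apply/andP; split; rewrite -subr_ge0.
  + have -> : a - eb / 2 = (expect (PsiM R) rh - expect (PsiP R) rh) * (\tr rh)^-1 / 2.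
      by rewrite /a /eb /pX /pY; field.
    by apply: mulr_ge0; [apply: mulr_ge0 | rewrite invr_ge0 ler0n].
  + have -> : eb - a = expect (PsiP R) rh * (\tr rh)^-1 by rewrite /eb /a addrK.
    exact: mulr_ge0.
Qed.
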